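(* There exists an open interval $I_2\subset\mathbb{R}$ containing $0$ such that the following hold. (1) There exist functions $\eta_2:I_2\to\mathbb{R}^3$ with $|\eta_2(t)|\ge1$ for all $t\in I_2$, and, for each $t\in I_2$, $T_t:I_2\to\mathbb{R}$, such that for all $x,t\in I_2$, $$(T_t(x))^2=(x+x^3,\,x^2,\,1)\cdot\eta_2(t).$$ (2) For each $x\in I_2$, the function $F_x:I_2\to\mathbb{R}$, $F_x(t):=(T_t(x))^2$, satisfies: (a) $F_x(x)=0$; (b) for $t\in I_2$, $\frac{\partial F_x}{\partial t}(t)=0$ if and only if $t=x$; (c) $\frac{\partial^2F_0}{\partial t^2}(0)=2$, and there is $\epsilon>0$ such that $\epsilon\le\frac{\partial^2F_x}{\partial t^2}(t)\le\epsilon^{-1}$ for all $x,t\in I_2$. *)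

(* Defs.v *)
From Stdlib Require Import Reals.
From Coquelicot Require Import Coquelicot.
Open Scope R_scope.

Definition dot3 (u v : R * R * R) : R :=
  let '(u1, u2, u3) := u in let '(v1, v2, v3) := v in u1 * v1 + u2 * v2 + u3 * v3.

Definition norm3 (u : R * R * R) : R := sqrt (dot3 u u).

(* Main.v *)
Require Import Defs.
From Stdlib Require Import Reals Lra Psatz.
From Coquelicot Require Import Coquelicot.
Open Scope R_scope.

Definition phi (x : R) := x + x ^ 3.
Definition FF (x s : R) := x ^ 2 - 2 * phi x * (s / (1 + 3 * s ^ 2)) + s ^ 2 * (1 - s ^ 2) / (1 + 3 * s ^ 2).
Definition F1 (x s : R) := 2 * ((1 - 3 * s ^ 2) / (1 + 3 * s ^ 2) ^ 2) * (phi s - phi x).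
Definition F2 (x s : R) := 36 * s * (s ^ 2 - 1) / (1 + 3 * s ^ 2) ^ 3 * (phi s - phi x)
   + 2 * (1 - 3 * s ^ 2) / (1 + 3 * s ^ 2).
Definition TT (s x : R) := (x - s) * sqrt ((1 - s ^ 2 - 2 * s * x) / (1 + 3 * s ^ 2)).

Lemma pos3 s : 0 < 1 + 3 * s ^ 2.
Proof. nra. Qed.

Lemma dFF x s : is_derive (FF x) s (F1 x s).
Proof.
  unfold FF, F1, phi. pose proof (pos3 s) as H.
  auto_derive. lra. field. lra.
Qed.

Lemma dF1 x s : is_derive (F1 x) s (F2 x s).
Proof.
  unfold F1, F2, phi. pose proof (pos3 s) as H.
  auto_derive. nra. field. lra.
Qed.

Lemma DF x s : Derive (FF x) s = F1 x s.
Proof. apply is_derive_unique, dFF. Qed.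

Lemma DDF x s : Derive (Derive (FF x)) s = F2 x s.
Proof.
  rewrite (Derive_ext _ (F1 x)) by apply DF. apply is_derive_unique, dF1.
Qed.

Lemma phi_bd s : -1/10 < s < 1/10 -> -102/1000 < phi s < 102/1000.
Proof. intros. unfold phi. nra. Qed.

Lemma F2_bd x s : -1/10 < x < 1/10 -> -1/10 < s < 1/10 -> 1/3 <= F2 x s <= 3.
Proof.
  intros Hx Hs. pose proof (phi_bd _ Hx). pose proof (phi_bd _ Hs).
  set (p := phi s - phi x) in *.
  assert (Hp : -21/100 < p < 21/100) by (unfold p; lra).
  set (u := 36 * s * (s ^ 2 - 1)).
  assert (Hs2 : 0 <= s ^ 2 < 1/100) by nra.
  assert (Hu : -4 < u < 4) by (unfold u; split; nra).
  set (D := 1 + 3 * s ^ 2).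
  assert (HD : 1 <= D <= 103/100) by (unfold D; nra).
  assert (Hup : -84/100 <= u * p <= 84/100) by nra.
  assert (Hw : 194/100 <= 2 * (1 - 3 * s ^ 2) * D ^ 2 <= 22/10).
  { assert (1 <= D^2 <= 11/10) by nra. split; nra. }
  assert (E : F2 x s = (u * p + 2 * (1 - 3 * s ^ 2) * D ^ 2) / D ^ 3).
  { unfold F2, u, p, D. field. nra. }
  rewrite E. assert (1 <= D ^ 3 <= 11/10) by nra.
  set (q := (u * p + 2 * (1 - 3 * s ^ 2) * D ^ 2) / D ^ 3).
  assert (q * D ^ 3 = u * p + 2 * (1 - 3 * s ^ 2) * D ^ 2) by (unfold q; field; lra).
  split; nra.
Qed.

Lemma TT_sq x s : -1/10 < x < 1/10 -> -1/10 < s < 1/10 -> TT s x ^ 2 = FF x s.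
Proof.
  intros Hx Hs. unfold TT, FF, phi. pose proof (pos3 s).
  assert (0 <= (1 - s ^ 2 - 2 * s * x) / (1 + 3 * s ^ 2)).
  { apply Rdiv_le_0_compat; nra. }
  rewrite Rpow_mult_distr, pow2_sqrt by lra.
  field. lra.
Qed.

Lemma loc_eq x t : -1/10 < x < 1/10 -> -1/10 < t < 1/10 ->
  locally t (fun s => FF x s = TT s x ^ 2).
Proof.
  intros Hx Ht.
  assert (Ho : open (fun s => -1/10 < s /\ s < 1/10)) by (apply open_and; [apply open_gt|apply open_lt]).
  apply (filter_imp (fun s => -1/10 < s /\ s < 1/10)).
  - intros s Hs. symmetry. apply TT_sq; auto.
  - apply Ho. exact Ht.
Qed.

Lemma loc_D x t : -1/10 < x < 1/10 -> -1/10 < t < 1/10 ->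
  locally t (fun s => F1 x s = Derive (fun s => TT s x ^ 2) s).
Proof.
  intros Hx Ht.
  assert (Ho : open (fun s => -1/10 < s /\ s < 1/10)) by (apply open_and; [apply open_gt|apply open_lt]).
  apply (filter_imp (fun s => -1/10 < s /\ s < 1/10)).
  - intros s Hs. rewrite <- DF. apply Derive_ext_loc, loc_eq; auto.
  - apply Ho. exact Ht.
Qed.

Lemma D2 x t : -1/10 < x < 1/10 -> -1/10 < t < 1/10 ->
  Derive_n (fun s => TT s x ^ 2) 2 t = F2 x t.
Proof.
  intros Hx Ht. change (Derive (Derive (fun s => TT s x ^ 2)) t = F2 x t).
  rewrite <- (Derive_ext_loc _ _ _ (loc_D x t Hx Ht)). apply is_derive_unique, dF1.
Qed.

Theorem mainTheorem8 :
  exists a b : R, a < 0 < b /\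
  exists (eta2 : R -> R * R * R) (T : R -> R -> R),
    (* (1) *)
    (forall t, a < t < b -> 1 <= norm3 (eta2 t)) /\
    (forall x t, a < x < b -> a < t < b ->
       (T t x) ^ 2 = dot3 (x + x ^ 3, x ^ 2, 1) (eta2 t)) /\
    (* (2): F_x(t) := (T_t(x))^2, twice differentiable on I_2 *)
    (forall x, a < x < b ->
       (fun t => (T t x) ^ 2) x = 0 /\
       (forall t, a < t < b ->
          ex_derive (fun s => (T s x) ^ 2) t /\
          ex_derive (Derive (fun s => (T s x) ^ 2)) t) /\
       (forall t, a < t < b ->
          (Derive (fun s => (T s x) ^ 2) t = 0 <-> t = x))) /\
    Derive_n (fun s => (T s 0) ^ 2) 2 0 = 2 /\
    exists eps : R, 0 < eps /\
      forall x t, a < x < b -> a < t < b ->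
        eps <= Derive_n (fun s => (T s x) ^ 2) 2 t <= / eps.
Proof.
  exists (-1/10), (1/10). split. lra.
  exists (fun t => (-2 * t / (1 + 3 * t ^ 2), 1, t ^ 2 * (1 - t ^ 2) / (1 + 3 * t ^ 2))), TT.
  split; [|split; [|split; [|split]]].
  - intros t Ht. unfold norm3, dot3. apply (Rle_trans _ (sqrt 1)). rewrite sqrt_1; lra. apply sqrt_le_1_alt. generalize (-2 * t / (1 + 3 * t ^ 2)) (t ^ 2 * (1 - t ^ 2) / (1 + 3 * t ^ 2)). intros u v. nra.
  - intros x t Hx Ht. rewrite TT_sq by auto. unfold FF, dot3, phi. pose proof (pos3 t). field. lra.
  - intros x Hx. split; [|split].
    + unfold TT. simpl. ring.
    + intros t Ht. split.
      * eapply ex_derive_ext_loc. apply loc_eq; eauto. eexists. apply dFF.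
      * eapply ex_derive_ext_loc. apply loc_D; eauto. eexists. apply dF1.
    + intros t Ht. assert (ED : Derive (fun s => TT s x ^ 2) t = F1 x t) by (rewrite <- DF; symmetry; apply Derive_ext_loc, loc_eq; auto). rewrite ED.
      unfold F1, phi. pose proof (pos3 t).
      assert (Hg : 0 < (1 - 3 * t ^ 2) / (1 + 3 * t ^ 2) ^ 2).
      { apply Rdiv_lt_0_compat; nra. }
      assert (E : t + t ^ 3 - (x + x ^ 3) = (t - x) * (1 + t ^ 2 + t * x + x ^ 2)) by ring.
      rewrite E. split.
      * intro H0. assert (Hz : (t - x) * (1 + t ^ 2 + t * x + x ^ 2) = 0).
        { apply Rmult_eq_reg_l with (2 * ((1 - 3 * t ^ 2) / (1 + 3 * t ^ 2) ^ 2)). lra. lra. }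
        apply Rmult_integral in Hz. destruct Hz as [Hz|Hz]; [lra|]. pose proof (pow2_ge_0 (t+x)); pose proof (pow2_ge_0 t); pose proof (pow2_ge_0 x); nra.
      * intros ->. ring.
  - rewrite D2 by lra. unfold F2, phi. field.
  - exists (1/3). split. lra. intros x t Hx Ht. rewrite D2 by auto.
    replace (/ (1/3)) with 3 by field. apply F2_bd; auto.
Qed.
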